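(* Every code $C\subseteq[5]^7$ with $|C|=14$ and minimum Hamming distance at least $6$ can be extended to such a code of size $15$: there exists $u\in[5]^7$ such that $C\cup\{u\}$ has $15$ elements and minimum Hamming distance at least $6$.
   Context: $[5]=\{0,1,2,3,4\}$. The Hamming distance between two words of $[5]^7$ is the number of coordinates in which they differ; the minimum distance of a code is the minimum Hamming distance between distinct codewords. *)

(* Defs.v *)
From mathcomp Require Import all_boot.
Set Implicit Arguments. Unset Strict Implicit. Unset Printing Implicit Defensive.

Definition word := {ffun 'I_7 -> 'I_5}.

Definition hamming (x y : word) : nat := #|[set i : 'I_7 | x i != y i]|.

Definition min_dist_ge (C : {set word}) (d : nat) : Prop :=
  forall x y, x \in C -> y \in C -> x != y -> d <= hamming x y.

(* Main.v *)
Require Import Defs.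
From mathcomp Require Import all_boot.
From mathcomp Require Import zify.

Definition agree (x y : word) : nat := \sum_i (x i == y i).

Lemma hamming_sum x y : hamming x y = \sum_i (x i != y i).
Proof.
rewrite /hamming -sum1_card big_mkcond /=.
by apply: eq_bigr => i _; rewrite inE; case: (x i != y i).
Qed.

Lemma agree_ham x y : agree x y + hamming x y = 7.
Proof.
rewrite hamming_sum /agree -big_split /=.
rewrite (eq_bigr (fun _ => 1)); last by move=> i _; case: (x i == y i).
by rewrite sum_nat_const card_ord.
Qed.

Lemma hamming_sym x y : hamming x y = hamming y x.
Proof. by rewrite !hamming_sum; apply: eq_bigr => i _; rewrite eq_sym. Qed.

Lemma eq_from_sum (I : finType) (P : pred I) (f g : I -> nat) :
  (forall k, P k -> f k <= g k) ->
  \sum_(k | P k) g k <= \sum_(k | P k) f k -> forall k, P k -> f k = g k.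
Proof.
move=> le le' k Pk; apply/eqP; rewrite eqn_leq le //=.
rewrite leqNgt; apply/negP => lt.
have H : \sum_(j | P j && (j != k)) f j <= \sum_(j | P j && (j != k)) g j.
  by apply: leq_sum => j /andP [Pj _]; apply: le.
move: le'; rewrite (bigD1 k Pk) [X in _ <= X](bigD1 k Pk) /=.
lia.
Qed.

Definition cnt (C : {set word}) (i : 'I_7) (a : 'I_5) : nat :=
  \sum_(y in C) (y i == a).

Lemma sum_pred1_nat (b : 'I_5) (F : 'I_5 -> nat) :
  \sum_a (b == a) * F a = F b.
Proof.
rewrite (bigD1 b) //= eqxx mul1n big1 ?addn0 // => a.
by rewrite eq_sym => /negPf ->.
Qed.

Lemma cnt_sum (C : {set word}) i : \sum_a cnt C i a = #|C|.
Proof.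
rewrite /cnt exchange_big /= -sum1_card; apply: eq_bigr => y _.
transitivity (\sum_a (y i == a) * 1); first by apply: eq_bigr => a _; rewrite muln1.
exact: (sum_pred1_nat (y i) (fun _ => 1)).
Qed.

Lemma cnt_sq (C : {set word}) i : \sum_(x in C) cnt C i (x i) = \sum_a cnt C i a * cnt C i a.
Proof.
rewrite (eq_bigr (fun x : word => \sum_a (x i == a) * cnt C i a)); last first.
  by move=> x _; rewrite sum_pred1_nat.
rewrite exchange_big /=; apply: eq_bigr => a _.
by rewrite -big_distrl.
Qed.

Lemma cnt_x (C : {set word}) x : #|C| = 14 -> min_dist_ge C 6 -> x \in C ->
  \sum_i cnt C i (x i) <= 20.
Proof.
move=> hC hd xC.
rewrite /cnt exchange_big /=.
rewrite (bigD1 x xC) /=.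
have H7 : \sum_i (x i == x i) = 7.
  by rewrite (eq_bigr (fun _ => 1)) ?sum_nat_const ?card_ord // => i _; rewrite eqxx.
have H1 : \sum_(y in C | y != x) \sum_i (y i == x i) <= \sum_(y in C | y != x) 1.
  apply: leq_sum => y /andP [yC yx].
  move: (agree_ham y x) (hd _ _ yC xC yx); rewrite /agree.
  move: (\sum_i _) (hamming y x) => a b; lia.
have E := sum1_card (mem C).
rewrite (bigD1 x xC) /= hC in E.
have H2 : \sum_(y in C | y != x) 1 = 13.
  by apply/eqP; rewrite -(eqn_add2l 1); apply/eqP; exact: E.
rewrite H7; apply: (@leq_trans (7 + \sum_(y in C | y != x) 1)).
  by apply: leq_add => //; exact: H1.
by rewrite H2.
Qed.

Theorem proposition5p7 (C : {set word}) :
  #|C| = 14 -> min_dist_ge C 6 ->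
  exists u : word, #|u |: C| = 15 /\ min_dist_ge (u |: C) 6.
Proof.
move=> hC hd.
pose n := cnt C.
pose N x := \sum_i n i (x i).
pose Q i := \sum_a n i a * n i a.
have hT : \sum_(x in C) N x = \sum_i Q i.
  by rewrite /N exchange_big /=; apply: eq_bigr => i _; rewrite cnt_sq.
have hN : forall x, x \in C -> N x <= 20 by move=> x xC; apply: cnt_x.
have hQ30 : forall i, \sum_a (n i a * n i a + 6) = Q i + 30.
  by move=> i; rewrite big_split /= sum_nat_const card_ord.
have h5 : forall i, \sum_a 5 * n i a = 70.
  by move=> i; rewrite -big_distrr /= cnt_sum hC.
have hpt : forall i a, 5 * n i a <= n i a * n i a + 6.
  by move=> i a; move: (n i a) => m; case: m => [|[|[|[|m]]]] //; nia.
have hQ : forall i, 40 <= Q i.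
  move=> i; have : \sum_a 5 * n i a <= \sum_a (n i a * n i a + 6).
    by apply: leq_sum => a _; apply: hpt.
  by rewrite hQ30 h5; lia.
have hT1 : \sum_(x in C) N x <= 280.
  apply: (@leq_trans (\sum_(x in C) 20)); first by apply: leq_sum => x xC; apply: hN.
  by rewrite sum_nat_const hC.
have hT2 : 280 <= \sum_i Q i.
  apply: (@leq_trans (\sum_(i < 7) 40)); last by apply: leq_sum => i _; apply: hQ.
  by rewrite sum_nat_const card_ord.
have hQe : forall i, Q i = 40.
  have L1 : forall k, true -> 40 <= Q k by move=> k _; apply: hQ.
  have L2 : \sum_k Q k <= \sum_(k < 7) 40 by rewrite sum_nat_const card_ord -hT.
  by move=> i; symmetry; apply: (@eq_from_sum _ (fun _ => true) (fun _ => 40) Q L1 L2 i isT).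
have hn : forall i a, 5 * n i a = n i a * n i a + 6.
  move=> i.
  have L1 : forall k, true -> 5 * n i k <= n i k * n i k + 6 by move=> k _; apply: hpt.
  have L2 : \sum_k (n i k * n i k + 6) <= \sum_k 5 * n i k by rewrite hQ30 h5 hQe.
  by move=> a; apply: (@eq_from_sum _ (fun _ => true) (fun a => 5 * n i a) (fun a => n i a * n i a + 6) L1 L2 a isT).
have hn23 : forall i a, 2 <= n i a <= 3.
  move=> i a; have := hn i a; move: (n i a) => m.
  by case: m => [|[|[|[|m]]]] //; nia.
have hNe : forall x, x \in C -> N x = 20.
  have L1 : forall k, k \in C -> N k <= 20 by [].
  have L2 : \sum_(k in C) 20 <= \sum_(k in C) N k by rewrite sum_nat_const hC hT; lia.
  by move=> x xC; apply: (@eq_from_sum _ (mem C) N (fun _ => 20) L1 L2 x xC).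
pose u : word := [ffun i => odflt ord0 [pick a | n i a == 2]].
have hu : forall i, n i (u i) = 2.
  move=> i; rewrite /u ffunE; case: pickP => [a /eqP // | H].
  exfalso.
  have : \sum_a n i a = \sum_(a : 'I_5) 3.
    apply: eq_bigr => a _; have := H a; have := hn23 i a; move: (n i a) => m /= h /negbT h'.
    lia.
  by rewrite sum_nat_const card_ord cnt_sum hC.
have hag : forall x, x \in C -> agree x u <= 1.
  move=> x xC.
  have E : \sum_i (3 - n i (x i)) + N x = 21.
    rewrite /N -big_split /= (eq_bigr (fun _ => 3)).
      by rewrite sum_nat_const card_ord.
    by move=> i _; have := hn23 i (x i); move: (n i (x i)) => m; lia.
  have L : agree x u <= \sum_i (3 - n i (x i)).
    apply: leq_sum => i _.
    by case: eqP => [-> | _] //; rewrite hu.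
  rewrite hNe // in E; lia.
have hdu : forall x, x \in C -> 6 <= hamming x u.
  by move=> x xC; have := hag x xC; have := agree_ham x u; lia.
have uC : u \notin C.
  apply/negP => uC; have := hag u uC; rewrite /agree.
  by rewrite (eq_bigr (fun _ => 1)) ?sum_nat_const ?card_ord // => i _; rewrite eqxx.
exists u; split.
  by rewrite cardsU1 uC hC.
move=> x y; rewrite !in_setU1 => /predU1P [-> | xC] /predU1P [-> | yC] nxy.
- by rewrite eqxx in nxy.
- by rewrite hamming_sym; apply: hdu.
- by apply: hdu.
- by apply: hd.
Qed.
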